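(* Let $\sigma,b$ and $x$ be as in the context. There exist $\rho,\delta^*\in1/\mathcal{C}$ such that for every $y\in\mathbb{R}^2$ and every $\delta\le\delta^*$: if $|x-y|_{A_\delta(x)}\le\rho$, then for all $\xi\in\mathbb{R}^2$ \[ \frac14|\xi|_{A_\delta(x)}\le|\xi|_{A_\delta(y)}\le4|\xi|_{A_\delta(x)}. \]
   Context: $\sigma,b:\mathbb{R}^2\to\mathbb{R}^2$ are $C^3$; $\partial_gf=\sum_ig^i\partial_{x_i}f$, $[f,g]=\partial_gf-\partial_fg$. $A_\delta(z)$ is the matrix with columns $\delta^{1/2}\sigma(z),\delta^{3/2}[b,\sigma](z)$, and $|\xi|_{A_\delta(z)}=|A_\delta(z)^{-1}\xi|$. $\lambda(z)$ is the smallest eigenvalue of $A(z)A(z)^T$ with $A(z)$ having columns $\sigma(z),[b,\sigma](z)$; $n(z)=\sum_{k=0}^3\sum_{|\alpha|=k}(|\partial^\alpha b(z)|+|\partial^\alpha\sigma(z)|)$. Local hypotheses: $\lambda(z)\ge\Lambda\in(0,1]$, $n(z)\le N$ ($N\ge1$) for $|z-x|<1$; there is a differentiable $\kappa_\sigma$ with $\partial_\sigma\sigma=\kappa_\sigma\sigma$ and $|\kappa_\sigma|,|\nabla\kappa_\sigma|\le n$. $\mathcal{C}=\{K(N/\Lambda)^q:K,q\ge1\text{ universal}\}$, $1/\mathcal{C}=\{c:1/c\in\mathcal{C}\}$. *)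

(* Defs.v *)
From Stdlib Require Import Reals List.
From Coquelicot Require Import Coquelicot.
Open Scope R_scope.

Definition pt := (R * R)%type.
Definition vadd (u v : pt) : pt := (fst u + fst v, snd u + snd v).
Definition vsub (u v : pt) : pt := (fst u - fst v, snd u - snd v).
Definition vscal (a : R) (u : pt) : pt := (a * fst u, a * snd u).
Definition enorm (u : pt) : R := sqrt (fst u ^ 2 + snd u ^ 2).

Definition slice1 (g : pt -> R) (z : pt) : R -> R := fun t => g (t, snd z).
Definition slice2 (g : pt -> R) (z : pt) : R -> R := fun t => g (fst z, t).
Definition pd1 (g : pt -> R) : pt -> R := fun z => Derive (slice1 g z) (fst z).
Definition pd2 (g : pt -> R) : pt -> R := fun z => Derive (slice2 g z) (snd z).

Fixpoint Ck (k : nat) (g : pt -> R) : Prop :=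
  match k with
  | O => forall z : pt, continuous g z
  | S k' => (forall z : pt, continuous g z) /\
            (forall z : pt, ex_derive (slice1 g z) (fst z) /\
                            ex_derive (slice2 g z) (snd z)) /\
            Ck k' (pd1 g) /\ Ck k' (pd2 g)
  end.

Definition vfield := pt -> pt.
Definition c1 (f : vfield) : pt -> R := fun z => fst (f z).
Definition c2 (f : vfield) : pt -> R := fun z => snd (f z).
Definition Ck_field (k : nat) (f : vfield) : Prop := Ck k (c1 f) /\ Ck k (c2 f).

Definition dalpha_s (a1 a2 : nat) (g : pt -> R) : pt -> R :=
  Nat.iter a1 pd1 (Nat.iter a2 pd2 g).
Definition dalpha (a1 a2 : nat) (f : vfield) : vfield :=
  fun z => (dalpha_s a1 a2 (c1 f) z, dalpha_s a1 a2 (c2 f) z).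

Definition vpd1 (f : vfield) : vfield := dalpha 1 0 f.
Definition vpd2 (f : vfield) : vfield := dalpha 0 1 f.

Definition dirder (g f : vfield) : vfield :=
  fun z => vadd (vscal (fst (g z)) (vpd1 f z)) (vscal (snd (g z)) (vpd2 f z)).

Definition bracket (f g : vfield) : vfield :=
  fun z => vsub (dirder g f z) (dirder f g z).

Definition multi_indices_le3 : list (nat * nat) :=
  (0,0)%nat :: (1,0)%nat :: (0,1)%nat :: (2,0)%nat :: (1,1)%nat :: (0,2)%nat
  :: (3,0)%nat :: (2,1)%nat :: (1,2)%nat :: (0,3)%nat :: nil.
Definition nfun (b sigma : vfield) (z : pt) : R :=
  fold_right Rplus 0
    (map (fun a => enorm (dalpha (fst a) (snd a) b z)
                   + enorm (dalpha (fst a) (snd a) sigma z)) multi_indices_le3).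

Record mat2 := Mat2 { col1 : pt ; col2 : pt }.
Definition mapply (M : mat2) (v : pt) : pt :=
  vadd (vscal (fst v) (col1 M)) (vscal (snd v) (col2 M)).
Definition mtrans (M : mat2) : mat2 :=
  Mat2 (fst (col1 M), fst (col2 M)) (snd (col1 M), snd (col2 M)).
Definition mmul (M P : mat2) : mat2 :=
  Mat2 (mapply M (col1 P)) (mapply M (col2 P)).
Definition mdet (M : mat2) : R :=
  fst (col1 M) * snd (col2 M) - fst (col2 M) * snd (col1 M).
Definition minv (M : mat2) : mat2 :=
  Mat2 (vscal (/ mdet M) (snd (col2 M), - snd (col1 M)))
       (vscal (/ mdet M) (- fst (col2 M), fst (col1 M))).

Definition is_eigenvalue (M : mat2) (l : R) : Prop :=
  exists v : pt, v <> (0, 0) /\ mapply M v = vscal l v.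

Definition Amat (b sigma : vfield) (z : pt) : mat2 :=
  Mat2 (sigma z) (bracket b sigma z).
(* lambda(z) >= L : smallest eigenvalue of A A^T is >= L,
   i.e. every (real) eigenvalue of the symmetric matrix A A^T is >= L *)
Definition lambda_ge (b sigma : vfield) (z : pt) (L : R) : Prop :=
  forall l, is_eigenvalue (mmul (Amat b sigma z) (mtrans (Amat b sigma z))) l -> L <= l.

Definition Adelta (b sigma : vfield) (delta : R) (z : pt) : mat2 :=
  Mat2 (vscal (sqrt delta) (sigma z)) (vscal (delta * sqrt delta) (bracket b sigma z)).
Definition normA (M : mat2) (xi : pt) : R := enorm (mapply (minv M) xi).

Definition local_hyps (b sigma : vfield) (kappa : pt -> R) (x : pt) (N L : R) : Prop :=
  Ck_field 3 b /\ Ck_field 3 sigma /\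
  0 < L /\ L <= 1 /\ 1 <= N /\
  (forall z : pt, enorm (vsub z x) < 1 ->
     lambda_ge b sigma z L /\ nfun b sigma z <= N) /\
  (forall z : pt, ex_filterdiff kappa (locally z)) /\
  (forall z : pt, enorm (vsub z x) < 1 ->
     dirder sigma sigma z = vscal (kappa z) (sigma z) /\
     Rabs (kappa z) <= nfun b sigma z /\
     enorm (pd1 kappa z, pd2 kappa z) <= nfun b sigma z).

(* an element of 1/C : 1 / (K (N/L)^q) with universal K, q >= 1 *)
Definition invC (K q N L : R) : R := / (K * Rpower (N / L) q).

(* Main.v *)
Require Import Defs.
From Stdlib Require Import Reals Lra Psatz List.
From Coquelicot Require Import Coquelicot.
Require Import Defs.
Open Scope R_scope.

Lemma sqrt_sq_le (a b : R) : 0 <= b -> a <= b * b -> sqrt a <= b.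
Proof.
  intros Hb H. rewrite <- (sqrt_square b) by lra. apply sqrt_le_1_alt. lra.
Qed.

Lemma enorm_ge0 u : 0 <= enorm u.
Proof. unfold enorm. apply sqrt_pos. Qed.

Lemma enorm_sq u : enorm u * enorm u = fst u ^ 2 + snd u ^ 2.
Proof. unfold enorm. apply sqrt_sqrt. nra. Qed.

Lemma abs_le_enorm1 u : Rabs (fst u) <= enorm u.
Proof.
  unfold enorm. rewrite <- sqrt_Rsqr_abs. apply sqrt_le_1_alt.
  unfold Rsqr. nra.
Qed.

Lemma abs_le_enorm2 u : Rabs (snd u) <= enorm u.
Proof.
  unfold enorm. rewrite <- sqrt_Rsqr_abs. apply sqrt_le_1_alt.
  unfold Rsqr. nra.
Qed.

Lemma enorm_le_l1 u : enorm u <= Rabs (fst u) + Rabs (snd u).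
Proof.
  unfold enorm. apply sqrt_sq_le.
  - pose proof (Rabs_pos (fst u)); pose proof (Rabs_pos (snd u)); lra.
  - pose proof (Rabs_pos (fst u)); pose proof (Rabs_pos (snd u)).
    rewrite <- (pow2_abs (fst u)), <- (pow2_abs (snd u)).
    simpl. nra.
Qed.

Lemma enorm_le_sq u c : 0 <= c -> fst u ^ 2 + snd u ^ 2 <= c * c -> enorm u <= c.
Proof. intros; unfold enorm; apply sqrt_sq_le; auto. Qed.

Lemma enorm_triangle u v : enorm (vadd u v) <= enorm u + enorm v.
Proof.
  apply enorm_le_sq. pose proof (enorm_ge0 u); pose proof (enorm_ge0 v); lra.
  pose proof (enorm_sq u). pose proof (enorm_sq v).
  pose proof (enorm_ge0 u); pose proof (enorm_ge0 v).
  assert (fst u * fst v + snd u * snd v <= enorm u * enorm v).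
  { destruct (Rle_dec (fst u * fst v + snd u * snd v) 0). nra.
    apply Rsqr_incr_0_var. 2: nra. unfold Rsqr.
    replace (enorm u * enorm v * (enorm u * enorm v)) with
      ((enorm u * enorm u) * (enorm v * enorm v)) by ring.
    rewrite H, H0. pose proof (pow2_ge_0 (fst u * snd v - snd u * fst v)). nra. }
  unfold vadd; simpl. nra.
Qed.

Lemma enorm_scal a u : enorm (vscal a u) = Rabs a * enorm u.
Proof.
  unfold enorm, vscal; cbn [fst snd].
  replace ((a * fst u) ^ 2 + (a * snd u) ^ 2) with (a ^ 2 * (fst u ^ 2 + snd u ^ 2)) by ring.
  rewrite sqrt_mult_alt by nra. f_equal. rewrite <- sqrt_Rsqr_abs. unfold Rsqr. f_equal; ring.
Qed.

Lemma sym_eig_det (p q r L : R) :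
  0 < L -> 0 <= p -> 0 <= r ->
  (forall l v1 v2, (v1 <> 0 \/ v2 <> 0) -> v1 * p + v2 * q = l * v1 ->
      v1 * q + v2 * r = l * v2 -> L <= l) ->
  L * L <= p * r - q * q.
Proof.
  intros HL Hp Hr H.
  destruct (Req_dec q 0) as [Hq|Hq].
  - assert (L <= p) by (apply (H p 1 0); [left; lra | rewrite Hq; ring | rewrite Hq; ring]).
    assert (L <= r) by (apply (H r 0 1); [right; lra | rewrite Hq; ring | rewrite Hq; ring]).
    rewrite Hq. assert (L*L <= p*r) by (apply Rmult_le_compat; lra). lra.
  - set (D := (p - r) * (p - r) + 4 * q * q).
    assert (HD : 0 <= D) by (unfold D; pose proof (Rle_0_sqr (p-r)); pose proof (Rle_0_sqr q); unfold Rsqr in *; lra).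
    set (s := sqrt D).
    assert (Hs : s * s = D) by (apply sqrt_sqrt; auto).
    assert (Hs0 : 0 <= s) by apply sqrt_pos.
    set (l := (p + r - s) / 2).
    assert (L <= l).
    { apply (H l q (l - p)). left; auto. ring.
      assert (E : q * q + (l - p) * r - l * (l - p) = (D - s * s) / 4) by (unfold l, D; field).
      rewrite Hs in E. lra. }
    unfold l in H0.
    assert (H1 : s * s <= (p + r - 2 * L) * (p + r - 2 * L)) by (apply Rmult_le_compat; lra).
    rewrite Hs in H1. unfold D in H1.
    assert (H2 : L * (p + r - 2 * L) >= 0) by (apply Rle_ge, Rmult_le_pos; lra).
    nra.
Qed.

Lemma det_bound (A : mat2) (L : R) :
  0 < L ->
  (forall l, is_eigenvalue (mmul A (mtrans A)) l -> L <= l) ->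
  L * L <= mdet A * mdet A.
Proof.
  intros HL H. destruct A as [[a c] [b d]].
  unfold is_eigenvalue, mmul, mtrans, mapply, vadd, vscal in H. cbn [fst snd col1 col2] in H.
  unfold mdet; cbn [fst snd col1 col2].
  replace ((a*d - b*c)*(a*d-b*c)) with ((a*a+b*b)*(c*c+d*d) - (a*c+b*d)*(a*c+b*d)) by ring.
  apply sym_eig_det; try nra.
  intros l v1 v2 Hv E1 E2. apply H. exists (v1, v2). split.
  - intro E; inversion E; subst; lra.
  - cbn [fst snd]. f_equal; lra.
Qed.

Lemma mvt0 (f : R -> R) (a b : R) :
  (forall t, ex_derive f t) ->
  exists c, Rmin a b <= c <= Rmax a b /\ f b - f a = Derive f c * (b - a).
Proof.
  intros H. apply MVT_gen.
  - intros t _. apply Derive_correct. apply H.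
  - intros t _. apply derivable_continuous_pt. apply ex_derive_Reals_0. apply H.
Qed.

Lemma mvt_bound (f : R -> R) (a b K : R) :
  (forall t, ex_derive f t) ->
  (forall t, Rmin a b <= t <= Rmax a b -> Rabs (Derive f t) <= K) ->
  Rabs (f b - f a) <= K * Rabs (b - a).
Proof.
  intros H HK. destruct (mvt0 f a b H) as [c [Hc E]]. rewrite E, Rabs_mult.
  apply Rmult_le_compat_r. apply Rabs_pos. apply HK; auto.
Qed.

Lemma deriv_bound (phi : R -> R) (a D C : R) (e0 : R) :
  0 < e0 -> is_derive phi a D ->
  (forall s, Rabs (s - a) < e0 -> Rabs (phi s - phi a) <= C * Rabs (s - a)) ->
  Rabs D <= C.
Proof.
  intros He0 HD Hb. apply is_derive_Reals in HD.
  destruct (Rle_dec (Rabs D) C) as [|Hn]; auto. exfalso.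
  assert (Heps : 0 < (Rabs D - C) / 2) by lra.
  destruct (HD _ Heps) as [del Hdel].
  set (h := Rmin (del / 2) (e0 / 2)).
  assert (Hh : 0 < h) by (unfold h; apply Rmin_pos; destruct del; simpl; lra).
  assert (Hhd : Rabs h < del) by (rewrite Rabs_pos_eq by lra; unfold h;
     pose proof (Rmin_l (del/2) (e0/2)); destruct del; simpl in *; lra).
  assert (Hhe : h < e0) by (unfold h; pose proof (Rmin_r (del/2) (e0/2)); lra).
  specialize (Hdel h (Rgt_not_eq _ _ Hh) Hhd).
  specialize (Hb (a + h)). replace (a + h - a) with h in Hb by ring.
  rewrite Rabs_pos_eq in Hb by lra. specialize (Hb ltac:(lra)).
  set (q := (phi (a + h) - phi a) / h) in *.
  assert (Rabs q <= C).
  { unfold q. rewrite Rabs_div by lra. rewrite (Rabs_pos_eq h) by lra.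
    apply Rmult_le_reg_r with h; auto. unfold Rdiv. rewrite Rmult_assoc, Rinv_l by lra. lra. }
  pose proof (Rabs_triang_inv D q). rewrite <- Rabs_Ropp in Hdel.
  replace (- (q - D)) with (D - q) in Hdel by ring. lra.
Qed.

Definition Pex (g : pt -> R) := forall z : pt,
  ex_derive (slice1 g z) (fst z) /\ ex_derive (slice2 g z) (snd z).
Definition inbox (x : pt) (r : R) (z : pt) :=
  Rabs (fst z - fst x) <= r /\ Rabs (snd z - snd x) <= r.

Lemma between_abs a b t c r : Rmin a b <= t <= Rmax a b ->
  Rabs (a - c) <= r -> Rabs (b - c) <= r -> Rabs (t - c) <= r.
Proof.
  intros [H1 H2] Ha Hb. unfold Rmin, Rmax in *.
  destruct (Rle_dec a b); apply Rabs_le; apply Rabs_le_between in Ha;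
  apply Rabs_le_between in Hb; lra.
Qed.

Lemma between_dist a b t : Rmin a b <= t <= Rmax a b -> Rabs (t - a) <= Rabs (b - a).
Proof.
  intros [H1 H2]. unfold Rmin, Rmax in *. destruct (Rle_dec a b).
  - rewrite !Rabs_pos_eq; lra.
  - rewrite !Rabs_left1; lra.
Qed.

Lemma ex1 g a c : Pex g -> ex_derive (fun t => g (t, c)) a.
Proof. intros H. exact (proj1 (H (a, c))). Qed.
Lemma ex2 g a c : Pex g -> ex_derive (fun t => g (a, t)) c.
Proof. intros H. exact (proj2 (H (a, c))). Qed.

Lemma Lip1 g x K p q : Pex g ->
  (forall z, inbox x (1/4) z -> Rabs (pd1 g z) <= K /\ Rabs (pd2 g z) <= K) ->
  inbox x (1/8) p -> inbox x (1/8) q ->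
  Rabs (g p - g q) <= K * (Rabs (fst p - fst q) + Rabs (snd p - snd q)).
Proof.
  intros Hg HK [Hp1 Hp2] [Hq1 Hq2]. destruct p as [p1 p2], q as [q1 q2].
  cbn [fst snd] in *.
  replace (g (p1, p2) - g (q1, q2)) with
    ((g (p1, p2) - g (q1, p2)) + (g (q1, p2) - g (q1, q2))) by ring.
  assert (A1 : Rabs (g (p1, p2) - g (q1, p2)) <= K * Rabs (p1 - q1)).
  { apply (mvt_bound (fun t => g (t, p2)) q1 p1 K).
    - intro t; apply ex1; auto.
    - intros t Ht. change (Rabs (pd1 g (t, p2)) <= K). apply HK. split; cbn [fst snd].
      + pose proof (between_abs _ _ _ (fst x) (1/8) Ht Hq1 Hp1); lra.
      + lra. }
  assert (A2 : Rabs (g (q1, p2) - g (q1, q2)) <= K * Rabs (p2 - q2)).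
  { apply (mvt_bound (fun t => g (q1, t)) q2 p2 K).
    - intro t; apply ex2; auto.
    - intros t Ht. change (Rabs (pd2 g (q1, t)) <= K). apply HK. split; cbn [fst snd].
      + lra.
      + pose proof (between_abs _ _ _ (snd x) (1/8) Ht Hq2 Hp2); lra. }
  pose proof (Rabs_triang (g (p1, p2) - g (q1, p2)) (g (q1, p2) - g (q1, q2))). lra.
Qed.

Lemma Lip2 g x K a c d : Pex g -> Pex (pd2 g) ->
  (forall z, inbox x (1/4) z -> Rabs (pd1 (pd2 g) z) <= K) ->
  inbox x (1/8) (a, c) -> inbox x (1/8) (a, d) ->
  Rabs (pd1 g (a, c) - pd1 g (a, d)) <= K * Rabs (c - d).
Proof.
  intros Hg Hg2 HK [Ha1 Hc] [_ Hd]. cbn [fst snd] in *.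
  apply (deriv_bound (fun s => g (s, c) - g (s, d)) a _ _ (1/8)). lra.
  - apply (is_derive_minus (fun s => g (s, c)) (fun s => g (s, d))).
    + apply (Derive_correct (fun s => g (s, c))). apply ex1; auto.
    + apply (Derive_correct (fun s => g (s, d))). apply ex1; auto.
  - intros s Hs.
    replace (g (s, c) - g (s, d) - (g (a, c) - g (a, d))) with
      ((fun t => g (s, t) - g (a, t)) c - (fun t => g (s, t) - g (a, t)) d) by (cbv beta; ring).
    replace (K * Rabs (c - d) * Rabs (s - a)) with (K * Rabs (s - a) * Rabs (c - d)) by ring.
    apply (mvt_bound (fun t => g (s, t) - g (a, t)) d c).
    + intro t. apply (ex_derive_minus (fun t => g (s, t)) (fun t => g (a, t))); apply ex2; auto.
    + intros t Ht. rewrite Derive_minus by (apply ex2; auto).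
      change (Rabs (pd2 g (s, t) - pd2 g (a, t)) <= K * Rabs (s - a)).
      apply (mvt_bound (fun r => pd2 g (r, t)) a s K).
      * intro r. apply ex1; auto.
      * intros r Hr. change (Rabs (pd1 (pd2 g) (r, t)) <= K). apply HK.
        split; cbn [fst snd].
        -- pose proof (between_dist _ _ _ Hr).
           pose proof (Rabs_triang (r - a) (a - fst x)).
           replace (r - a + (a - fst x)) with (r - fst x) in H0 by ring. lra.
        -- pose proof (between_abs _ _ _ (snd x) (1/8) Ht Hd Hc). lra.
Qed.

Lemma Taylor g x K y : Pex g -> Pex (pd1 g) -> Pex (pd2 g) ->
  (forall z, inbox x (1/4) z ->
     Rabs (pd1 (pd1 g) z) <= K /\ Rabs (pd1 (pd2 g) z) <= K /\ Rabs (pd2 (pd2 g) z) <= K) ->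
  inbox x (1/8) y ->
  Rabs (g y - g x - ((fst y - fst x) * pd1 g x + (snd y - snd x) * pd2 g x))
    <= K * ((Rabs (fst y - fst x) + Rabs (snd y - snd x)) *
            (Rabs (fst y - fst x) + Rabs (snd y - snd x))).
Proof.
  intros Hg Hg1 Hg2 HK [Hy1 Hy2]. destruct x as [x1 x2], y as [y1 y2]. cbn [fst snd] in *.
  destruct (mvt0 (fun t => g (y1, t)) x2 y2) as [et [Het Ee]]. intro t; apply ex2; auto.
  destruct (mvt0 (fun t => g (t, x2)) x1 y1) as [xi [Hxi Ex]]. intro t; apply ex1; auto.
  change (Derive (fun t => g (y1, t)) et) with (pd2 g (y1, et)) in Ee.
  change (Derive (fun t => g (t, x2)) xi) with (pd1 g (xi, x2)) in Ex.
  replace (g (y1, y2) - g (x1, x2) - ((y1 - x1) * pd1 g (x1, x2) + (y2 - x2) * pd2 g (x1, x2)))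
    with ((pd2 g (y1, et) - pd2 g (x1, x2)) * (y2 - x2) + (pd1 g (xi, x2) - pd1 g (x1, x2)) * (y1 - x1))
    by lra.
  assert (He : Rabs (et - x2) <= Rabs (y2 - x2)) by (apply between_dist; auto).
  assert (Hx : Rabs (xi - x1) <= Rabs (y1 - x1)) by (apply between_dist; auto).
  assert (B1 : Rabs (pd2 g (y1, et) - pd2 g (x1, x2)) <= K * (Rabs (y1 - x1) + Rabs (et - x2))).
  { apply (Lip1 (pd2 g) (x1, x2) K (y1, et) (x1, x2)); auto.
    - intros z Hz. destruct (HK z Hz) as [_ [H1 H2]]. auto.
    - split; cbn [fst snd]; lra.
    - split; cbn [fst snd]; rewrite Rminus_diag, Rabs_R0; lra. }
  assert (B2 : Rabs (pd1 g (xi, x2) - pd1 g (x1, x2)) <= K * Rabs (xi - x1)).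
  { apply (mvt_bound (fun t => pd1 g (t, x2)) x1 xi K).
    - intro t; apply ex1; auto.
    - intros t Ht. change (Rabs (pd1 (pd1 g) (t, x2)) <= K). apply HK.
      split; cbn [fst snd].
      + pose proof (between_dist _ _ _ Ht). lra.
      + rewrite Rminus_diag, Rabs_R0; lra. }
  assert (K0 : 0 <= K).
  { destruct (HK (x1, x2)) as [H _]. split; cbn [fst snd]; rewrite Rminus_diag, Rabs_R0; lra.
    pose proof (Rabs_pos (pd1 (pd1 g) (x1, x2))); lra. }
  set (a := Rabs (y1 - x1)) in *. set (b := Rabs (y2 - x2)) in *.
  assert (0 <= a) by apply Rabs_pos. assert (0 <= b) by apply Rabs_pos.
  eapply Rle_trans. apply Rabs_triang. rewrite !Rabs_mult. fold a b.
  assert (Rabs (pd2 g (y1, et) - pd2 g (x1, x2)) <= K * (a + b)).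
  { eapply Rle_trans. apply B1. apply Rmult_le_compat_l; lra. }
  assert (Rabs (pd1 g (xi, x2) - pd1 g (x1, x2)) <= K * a).
  { eapply Rle_trans. apply B2. apply Rmult_le_compat_l; lra. }
  pose proof (Rabs_pos (pd2 g (y1, et) - pd2 g (x1, x2))).
  pose proof (Rabs_pos (pd1 g (xi, x2) - pd1 g (x1, x2))).
  nra.
Qed.

Definition l1 (v : pt) := Rabs (fst v) + Rabs (snd v).

Lemma l1_ge0 v : 0 <= l1 v.
Proof. unfold l1. pose proof (Rabs_pos (fst v)); pose proof (Rabs_pos (snd v)); lra. Qed.

Lemma enorm_le_l1' v : enorm v <= l1 v.
Proof. apply enorm_le_l1. Qed.

Lemma key_identity (M M' : mat2) (u : pt) : mdet M <> 0 ->
  mapply (minv M) (mapply M' u) =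
  vadd u (vadd (vscal (fst u) (mapply (minv M) (vsub (col1 M') (col1 M))))
               (vscal (snd u) (mapply (minv M) (vsub (col2 M') (col2 M))))).
Proof.
  intros H. destruct M as [[a c] [b d]], M' as [[a' c'] [b' d']], u as [u1 u2].
  unfold mdet in H; cbn [fst snd col1 col2] in H.
  unfold mapply, minv, mdet, vadd, vscal, vsub; cbn [fst snd col1 col2].
  f_equal; field; auto.
Qed.

Lemma minv_right (M : mat2) (v : pt) : mdet M <> 0 -> mapply M (mapply (minv M) v) = v.
Proof.
  intros H. destruct M as [[a c] [b d]], v as [v1 v2].
  unfold mdet in H; cbn [fst snd col1 col2] in H.
  unfold mapply, minv, mdet, vadd, vscal; cbn [fst snd col1 col2].
  f_equal; field; auto.
Qed.

Lemma compare_final (v u e1 e2 : pt) :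
  v = vadd u (vadd (vscal (fst u) e1) (vscal (snd u) e2)) ->
  l1 e1 + l1 e2 <= 1/2 ->
  / 4 * enorm v <= enorm u /\ enorm u <= 4 * enorm v.
Proof.
  intros Hv He. set (d := vadd (vscal (fst u) e1) (vscal (snd u) e2)) in *.
  assert (Hd : enorm d <= enorm u / 2).
  { eapply Rle_trans. apply enorm_le_l1'. unfold l1, d, vadd, vscal; cbn [fst snd].
    pose proof (abs_le_enorm1 u). pose proof (abs_le_enorm2 u).
    unfold l1 in He.
    set (U := enorm u) in *.
    assert (0 <= U) by apply enorm_ge0.
    pose proof (Rabs_triang (fst u * fst e1) (snd u * fst e2)).
    pose proof (Rabs_triang (fst u * snd e1) (snd u * snd e2)).
    rewrite !Rabs_mult in *.
    pose proof (Rabs_pos (fst e1)). pose proof (Rabs_pos (fst e2)).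
    pose proof (Rabs_pos (snd e1)). pose proof (Rabs_pos (snd e2)).
    pose proof (Rabs_pos (fst u)). pose proof (Rabs_pos (snd u)).
    assert (Rabs (fst u) * Rabs (fst e1) <= U * Rabs (fst e1)) by (apply Rmult_le_compat_r; lra).
    assert (Rabs (snd u) * Rabs (fst e2) <= U * Rabs (fst e2)) by (apply Rmult_le_compat_r; lra).
    assert (Rabs (fst u) * Rabs (snd e1) <= U * Rabs (snd e1)) by (apply Rmult_le_compat_r; lra).
    assert (Rabs (snd u) * Rabs (snd e2) <= U * Rabs (snd e2)) by (apply Rmult_le_compat_r; lra).
    nra. }
  assert (H1 : enorm v <= enorm u + enorm d) by (rewrite Hv; apply enorm_triangle).
  assert (Hu : u = vadd v (vscal (-1) d)).
  { rewrite Hv. destruct u, d; unfold vadd, vscal; cbn [fst snd]. f_equal; ring. }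
  assert (H2 : enorm u <= enorm v + enorm d).
  { rewrite Hu at 1. eapply Rle_trans. apply enorm_triangle. rewrite enorm_scal.
    replace (Rabs (-1)) with 1 by (unfold Rabs; destruct Rcase_abs; lra). lra. }
  pose proof (enorm_ge0 v). pose proof (enorm_ge0 u). split; lra.
Qed.

Lemma Mi_formula (s s3 : R) (S B v : pt) :
  0 < s -> 0 < s3 -> fst S * snd B - fst B * snd S <> 0 ->
  mapply (minv (Mat2 (vscal s S) (vscal s3 B))) v =
  ((snd B * fst v - fst B * snd v) / (s * (fst S * snd B - fst B * snd S)),
   (fst S * snd v - snd S * fst v) / (s3 * (fst S * snd B - fst B * snd S))).
Proof.
  intros Hs Hs3 Hd. destruct S as [S1 S2], B as [B1 B2], v as [v1 v2]. cbn [fst snd] in *.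
  unfold mapply, minv, mdet, vadd, vscal; cbn [fst snd col1 col2].
  assert (s * S1 * (s3 * B2) - s3 * B1 * (s * S2) <> 0).
  { replace (s * S1 * (s3 * B2) - s3 * B1 * (s * S2)) with ((s * s3) * (S1 * B2 - B1 * S2)) by ring.
    apply Rmult_integral_contrapositive_currified; auto. apply Rgt_not_eq. apply Rmult_lt_0_compat; lra. }
  f_equal; field; repeat split; auto; lra.
Qed.

Lemma Mi_S (s s3 : R) (S B : pt) :
  0 < s -> 0 < s3 -> fst S * snd B - fst B * snd S <> 0 ->
  mapply (minv (Mat2 (vscal s S) (vscal s3 B))) S = (/ s, 0).
Proof.
  intros Hs Hs3 Hd. rewrite Mi_formula by auto. f_equal.
  - field. split; lra.
  - unfold Rdiv. replace (fst S * snd S - snd S * fst S) with 0 by ring. ring.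
Qed.

Lemma div_bound (x y m l : R) : 0 < m -> 0 < l -> l <= Rabs y -> Rabs x <= m ->
  Rabs (x / y) <= m / l.
Proof.
  intros Hm Hl Hy Hx. unfold Rdiv. rewrite Rabs_mult, Rabs_inv.
  apply Rmult_le_compat; try apply Rabs_pos; auto.
  left; apply Rinv_0_lt_compat; lra.
  apply Rinv_le_contravar; lra.
Qed.

Lemma Mi_bound (s s3 L a c : R) (S B v : pt) :
  0 < s3 -> s3 <= s -> 0 < L -> L <= Rabs (fst S * snd B - fst B * snd S) ->
  Rabs (fst S) <= a -> Rabs (snd S) <= a -> Rabs (fst B) <= c -> Rabs (snd B) <= c ->
  l1 (mapply (minv (Mat2 (vscal s S) (vscal s3 B))) v) <= (a + c) * l1 v / (s3 * L).
Proof.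
  intros Hs3 Hss HL HdA Ha1 Ha2 Hc1 Hc2.
  assert (Hd : fst S * snd B - fst B * snd S <> 0).
  { intro E; rewrite E, Rabs_R0 in HdA; lra. }
  rewrite Mi_formula by (auto; lra). unfold l1; cbn [fst snd].
  set (dA := fst S * snd B - fst B * snd S) in *.
  pose proof (Rabs_pos (fst v)). pose proof (Rabs_pos (snd v)).
  assert (Hc0 : 0 <= c) by (pose proof (Rabs_pos (fst B)); lra).
  assert (Ha0 : 0 <= a) by (pose proof (Rabs_pos (fst S)); lra).
  destruct (Req_dec (Rabs (fst v) + Rabs (snd v)) 0) as [Z|Z].
  { assert (fst v = 0) by (apply Rabs_eq_0; lra). assert (snd v = 0) by (apply Rabs_eq_0; lra).
    rewrite H1, H2. unfold Rdiv. rewrite !Rmult_0_r, !Rminus_0_r, !Rmult_0_l, Rabs_R0. lra. }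
  assert (P : 0 < Rabs (fst v) + Rabs (snd v)) by lra.
  destruct (Req_dec a 0) as [Za|Za]; destruct (Req_dec c 0) as [Zc|Zc].
  - (* degenerate: S = 0 contradicts dA *)
    exfalso. assert (fst S = 0) by (apply Rabs_eq_0; pose proof (Rabs_pos (fst S)); lra).
    assert (snd S = 0) by (apply Rabs_eq_0; pose proof (Rabs_pos (snd S)); lra).
    apply Hd. unfold dA. rewrite H1, H2. ring.
  - exfalso. assert (fst S = 0) by (apply Rabs_eq_0; pose proof (Rabs_pos (fst S)); lra).
    assert (snd S = 0) by (apply Rabs_eq_0; pose proof (Rabs_pos (snd S)); lra).
    apply Hd. unfold dA. rewrite H1, H2. ring.
  - exfalso. assert (fst B = 0) by (apply Rabs_eq_0; pose proof (Rabs_pos (fst B)); lra).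
    assert (snd B = 0) by (apply Rabs_eq_0; pose proof (Rabs_pos (snd B)); lra).
    apply Hd. unfold dA. rewrite H1, H2. ring.
  - assert (A1 : Rabs ((snd B * fst v - fst B * snd v) / (s * dA)) <=
                 (c * (Rabs (fst v) + Rabs (snd v))) / (s3 * L)).
    { apply div_bound. apply Rmult_lt_0_compat; lra. apply Rmult_lt_0_compat; lra.
      rewrite Rabs_mult, (Rabs_pos_eq s) by lra. apply Rmult_le_compat; lra.
      eapply Rle_trans. apply Rabs_triang. rewrite Rabs_Ropp, !Rabs_mult.
      assert (Rabs (snd B) * Rabs (fst v) <= c * Rabs (fst v)) by (apply Rmult_le_compat_r; lra).
      assert (Rabs (fst B) * Rabs (snd v) <= c * Rabs (snd v)) by (apply Rmult_le_compat_r; lra).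
      lra. }
    assert (A2 : Rabs ((fst S * snd v - snd S * fst v) / (s3 * dA)) <=
                 (a * (Rabs (fst v) + Rabs (snd v))) / (s3 * L)).
    { apply div_bound. apply Rmult_lt_0_compat; lra. apply Rmult_lt_0_compat; lra.
      rewrite Rabs_mult, (Rabs_pos_eq s3) by lra. apply Rmult_le_compat; lra.
      eapply Rle_trans. apply Rabs_triang. rewrite Rabs_Ropp, !Rabs_mult.
      assert (Rabs (fst S) * Rabs (snd v) <= a * Rabs (snd v)) by (apply Rmult_le_compat_r; lra).
      assert (Rabs (snd S) * Rabs (fst v) <= a * Rabs (fst v)) by (apply Rmult_le_compat_r; lra).
      lra. }
    assert (E : (a + c) * (Rabs (fst v) + Rabs (snd v)) / (s3 * L) =
       c * (Rabs (fst v) + Rabs (snd v)) / (s3 * L) + a * (Rabs (fst v) + Rabs (snd v)) / (s3 * L))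
      by (field; split; lra).
    lra.
Qed.

Lemma Mi_bound' (s s3 L a c : R) (S B v : pt) :
  0 < s3 -> s3 <= s -> 0 < L -> L <= Rabs (fst S * snd B - fst B * snd S) ->
  Rabs (fst S) <= a -> Rabs (snd S) <= a -> Rabs (fst B) <= c -> Rabs (snd B) <= c ->
  s3 * L * l1 (mapply (minv (Mat2 (vscal s S) (vscal s3 B))) v) <= (a + c) * l1 v.
Proof.
  intros. pose proof (Mi_bound s s3 L a c S B v H H0 H1 H2 H3 H4 H5 H6).
  assert (0 < s3 * L) by (apply Rmult_lt_0_compat; lra).
  apply Rmult_le_compat_l with (r := s3 * L) in H7; [|lra].
  replace (s3 * L * ((a + c) * l1 v / (s3 * L))) with ((a + c) * l1 v) in H7 by (field; lra).
  lra.
Qed.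

Lemma mapply_add P a b : mapply P (vadd a b) = vadd (mapply P a) (mapply P b).
Proof. destruct P as [[? ?] [? ?]], a, b; unfold mapply, vadd, vscal; cbn [fst snd col1 col2]; f_equal; ring. Qed.
Lemma mapply_scal P c a : mapply P (vscal c a) = vscal c (mapply P a).
Proof. destruct P as [[? ?] [? ?]], a; unfold mapply, vadd, vscal; cbn [fst snd col1 col2]; f_equal; ring. Qed.
Lemma l1_add a b : l1 (vadd a b) <= l1 a + l1 b.
Proof. unfold l1, vadd; cbn [fst snd]. pose proof (Rabs_triang (fst a) (fst b)).
  pose proof (Rabs_triang (snd a) (snd b)). lra. Qed.
Lemma l1_scal c a : l1 (vscal c a) = Rabs c * l1 a.
Proof. unfold l1, vscal; cbn [fst snd]. rewrite !Rabs_mult. ring. Qed.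

Lemma lin_bnd w1 w2 a c r s s3 N K : Rabs w1 <= r -> Rabs w2 <= r -> Rabs a <= N -> Rabs c <= K ->
  0 < s3 -> s3 <= s -> Rabs (- (w1 * (s * a) + w2 * (s3 * c))) <= r * s * N + r * s * K.
Proof.
  intros H1 H2 H3 H4 H5 H6. rewrite Rabs_Ropp. eapply Rle_trans. apply Rabs_triang.
  rewrite !Rabs_mult, (Rabs_pos_eq s), (Rabs_pos_eq s3) by lra.
  pose proof (Rabs_pos w1). pose proof (Rabs_pos w2). pose proof (Rabs_pos a). pose proof (Rabs_pos c).
  assert (Rabs w1 * (s * Rabs a) <= r * s * N).
  { replace (r * s * N) with (r * (s * N)) by ring. apply Rmult_le_compat; try nra.
    all: try (apply Rmult_le_compat_l; lra). }
  assert (Rabs w2 * (s3 * Rabs c) <= r * s * K).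
  { replace (r * s * K) with (r * (s * K)) by ring. apply Rmult_le_compat; try nra.
    all: try (apply Rmult_le_compat; lra). }
  lra.
Qed.

Lemma Ck3_P g : Ck 3 g -> Pex g /\ Pex (pd1 g) /\ Pex (pd2 g).
Proof.
  intros [_ [H0 [[_ [H1 _]] [_ [H2 _]]]]]. split; [exact H0|split; [exact H1|exact H2]].
Qed.

Definition Bnd (N : R) (z : pt) (g : pt -> R) :=
  Rabs (g z) <= N /\ Rabs (pd1 g z) <= N /\ Rabs (pd2 g z) <= N /\
  Rabs (pd1 (pd1 g) z) <= N /\ Rabs (pd1 (pd2 g) z) <= N /\ Rabs (pd2 (pd2 g) z) <= N.

Lemma comp1 f a1 a2 z : Rabs (dalpha_s a1 a2 (c1 f) z) <= enorm (dalpha a1 a2 f z).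
Proof. exact (abs_le_enorm1 (dalpha a1 a2 f z)). Qed.
Lemma comp2 f a1 a2 z : Rabs (dalpha_s a1 a2 (c2 f) z) <= enorm (dalpha a1 a2 f z).
Proof. exact (abs_le_enorm2 (dalpha a1 a2 f z)). Qed.

Lemma nfun_bnd b sigma z N : nfun b sigma z <= N ->
  Bnd N z (c1 sigma) /\ Bnd N z (c2 sigma) /\ Bnd N z (c1 b) /\ Bnd N z (c2 b).
Proof.
  intros H. unfold nfun, multi_indices_le3 in H. cbn [map fold_right fst snd] in H.
  pose proof (enorm_ge0 (dalpha 0 0 b z)). pose proof (enorm_ge0 (dalpha 0 0 sigma z)).
  pose proof (enorm_ge0 (dalpha 1 0 b z)). pose proof (enorm_ge0 (dalpha 1 0 sigma z)).
  pose proof (enorm_ge0 (dalpha 0 1 b z)). pose proof (enorm_ge0 (dalpha 0 1 sigma z)).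
  pose proof (enorm_ge0 (dalpha 2 0 b z)). pose proof (enorm_ge0 (dalpha 2 0 sigma z)).
  pose proof (enorm_ge0 (dalpha 1 1 b z)). pose proof (enorm_ge0 (dalpha 1 1 sigma z)).
  pose proof (enorm_ge0 (dalpha 0 2 b z)). pose proof (enorm_ge0 (dalpha 0 2 sigma z)).
  pose proof (enorm_ge0 (dalpha 3 0 b z)). pose proof (enorm_ge0 (dalpha 3 0 sigma z)).
  pose proof (enorm_ge0 (dalpha 2 1 b z)). pose proof (enorm_ge0 (dalpha 2 1 sigma z)).
  pose proof (enorm_ge0 (dalpha 1 2 b z)). pose proof (enorm_ge0 (dalpha 1 2 sigma z)).
  pose proof (enorm_ge0 (dalpha 0 3 b z)). pose proof (enorm_ge0 (dalpha 0 3 sigma z)).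
  repeat split;
  match goal with
  | |- Rabs ?t <= N =>
    first
      [ pose proof (comp1 sigma 0 0 z) as C; change (Rabs t <= enorm (dalpha 0 0 sigma z)) in C
      | pose proof (comp2 sigma 0 0 z) as C; change (Rabs t <= enorm (dalpha 0 0 sigma z)) in C
      | pose proof (comp1 b 0 0 z) as C; change (Rabs t <= enorm (dalpha 0 0 b z)) in C
      | pose proof (comp2 b 0 0 z) as C; change (Rabs t <= enorm (dalpha 0 0 b z)) in C
      | pose proof (comp1 sigma 1 0 z) as C; change (Rabs t <= enorm (dalpha 1 0 sigma z)) in C
      | pose proof (comp2 sigma 1 0 z) as C; change (Rabs t <= enorm (dalpha 1 0 sigma z)) in C
      | pose proof (comp1 b 1 0 z) as C; change (Rabs t <= enorm (dalpha 1 0 b z)) in C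
      | pose proof (comp2 b 1 0 z) as C; change (Rabs t <= enorm (dalpha 1 0 b z)) in C
      | pose proof (comp1 sigma 0 1 z) as C; change (Rabs t <= enorm (dalpha 0 1 sigma z)) in C
      | pose proof (comp2 sigma 0 1 z) as C; change (Rabs t <= enorm (dalpha 0 1 sigma z)) in C
      | pose proof (comp1 b 0 1 z) as C; change (Rabs t <= enorm (dalpha 0 1 b z)) in C
      | pose proof (comp2 b 0 1 z) as C; change (Rabs t <= enorm (dalpha 0 1 b z)) in C
      | pose proof (comp1 sigma 2 0 z) as C; change (Rabs t <= enorm (dalpha 2 0 sigma z)) in C
      | pose proof (comp2 sigma 2 0 z) as C; change (Rabs t <= enorm (dalpha 2 0 sigma z)) in C
      | pose proof (comp1 b 2 0 z) as C; change (Rabs t <= enorm (dalpha 2 0 b z)) in C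
      | pose proof (comp2 b 2 0 z) as C; change (Rabs t <= enorm (dalpha 2 0 b z)) in C
      | pose proof (comp1 sigma 1 1 z) as C; change (Rabs t <= enorm (dalpha 1 1 sigma z)) in C
      | pose proof (comp2 sigma 1 1 z) as C; change (Rabs t <= enorm (dalpha 1 1 sigma z)) in C
      | pose proof (comp1 b 1 1 z) as C; change (Rabs t <= enorm (dalpha 1 1 b z)) in C
      | pose proof (comp2 b 1 1 z) as C; change (Rabs t <= enorm (dalpha 1 1 b z)) in C
      | pose proof (comp1 sigma 0 2 z) as C; change (Rabs t <= enorm (dalpha 0 2 sigma z)) in C
      | pose proof (comp2 sigma 0 2 z) as C; change (Rabs t <= enorm (dalpha 0 2 sigma z)) in C
      | pose proof (comp1 b 0 2 z) as C; change (Rabs t <= enorm (dalpha 0 2 b z)) in C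
      | pose proof (comp2 b 0 2 z) as C; change (Rabs t <= enorm (dalpha 0 2 b z)) in C ];
    lra
  end.
Qed.

Definition Fb (sigma b : vfield) (g h : pt -> R) (z : pt) :=
  c1 sigma z * pd1 g z + c2 sigma z * pd2 g z - (c1 b z * pd1 h z + c2 b z * pd2 h z).

Lemma bracket_eq b sigma z :
  bracket b sigma z = (Fb sigma b (c1 b) (c1 sigma) z, Fb sigma b (c2 b) (c2 sigma) z).
Proof. reflexivity. Qed.

Lemma prod_bound a c N : Rabs a <= N -> Rabs c <= N -> Rabs (a * c) <= N * N.
Proof. intros. rewrite Rabs_mult. apply Rmult_le_compat; auto; apply Rabs_pos. Qed.

Lemma Fb_bound sigma b g h z N :
  Bnd N z (c1 sigma) -> Bnd N z (c2 sigma) -> Bnd N z (c1 b) -> Bnd N z (c2 b) ->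
  Bnd N z g -> Bnd N z h -> Rabs (Fb sigma b g h z) <= 4 * (N * N).
Proof.
  intros [S1 _] [S2 _] [B1 _] [B2 _] [_ [G1 [G2 _]]] [_ [H1 [H2 _]]].
  unfold Fb.
  pose proof (prod_bound _ _ _ S1 G1). pose proof (prod_bound _ _ _ S2 G2).
  pose proof (prod_bound _ _ _ B1 H1). pose proof (prod_bound _ _ _ B2 H2).
  set (a1 := c1 sigma z * pd1 g z) in *. set (a2 := c2 sigma z * pd2 g z) in *.
  set (a3 := c1 b z * pd1 h z) in *. set (a4 := c2 b z * pd2 h z) in *.
  pose proof (Rabs_triang (a1 + a2) (- (a3 + a4))) as T. rewrite Rabs_Ropp in T.
  pose proof (Rabs_triang a1 a2). pose proof (Rabs_triang a3 a4).
  unfold Rminus. lra.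
Qed.

Lemma prod_diff a a' c c' N K : Rabs a' <= N -> Rabs c <= N ->
  Rabs (a' - a) <= K -> Rabs (c' - c) <= K -> Rabs (a' * c' - a * c) <= 2 * (N * K).
Proof.
  intros Ha Hc Hda Hdc.
  replace (a' * c' - a * c) with (a' * (c' - c) + c * (a' - a)) by ring.
  eapply Rle_trans. apply Rabs_triang. rewrite !Rabs_mult.
  assert (Rabs a' * Rabs (c' - c) <= N * K) by (apply Rmult_le_compat; auto; apply Rabs_pos).
  assert (Rabs c * Rabs (a' - a) <= N * K) by (apply Rmult_le_compat; auto; apply Rabs_pos).
  lra.
Qed.

Lemma LipAll g x y N : Ck 3 g -> (forall z, inbox x (1/4) z -> Bnd N z g) ->
  inbox x (1/8) y ->
  let H := Rabs (fst y - fst x) + Rabs (snd y - snd x) in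
  Rabs (g y - g x) <= N * H /\ Rabs (pd1 g y - pd1 g x) <= N * H /\
  Rabs (pd2 g y - pd2 g x) <= N * H.
Proof.
  intros HC HB Hy H. destruct (Ck3_P g HC) as [P0 [P1 P2]].
  assert (Hx : inbox x (1/8) x) by (split; rewrite Rminus_diag, Rabs_R0; lra).
  split; [|split].
  - apply (Lip1 g x N y x); auto. intros z Hz; destruct (HB z Hz) as [_ [? [? _]]]; auto.
  - destruct x as [x1 x2], y as [y1 y2]. unfold H; cbn [fst snd] in *.
    destruct Hy as [Hy1 Hy2]; cbn [fst snd] in *.
    replace (pd1 g (y1, y2) - pd1 g (x1, x2)) with
      ((pd1 g (y1, y2) - pd1 g (x1, y2)) + (pd1 g (x1, y2) - pd1 g (x1, x2))) by ring.
    assert (A1 : Rabs (pd1 g (y1, y2) - pd1 g (x1, y2)) <= N * Rabs (y1 - x1)).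
    { apply (mvt_bound (fun t => pd1 g (t, y2)) x1 y1 N).
      - intro t; apply ex1; auto.
      - intros t Ht. change (Rabs (pd1 (pd1 g) (t, y2)) <= N). apply HB.
        split; cbn [fst snd]. pose proof (between_dist _ _ _ Ht); lra. lra. }
    assert (A2 : Rabs (pd1 g (x1, y2) - pd1 g (x1, x2)) <= N * Rabs (y2 - x2)).
    { apply (Lip2 g (x1, x2) N x1 y2 x2); auto.
      - intros z Hz; destruct (HB z Hz) as [_ [_ [_ [_ [? _]]]]]; auto.
      - split; cbn [fst snd]; [rewrite Rminus_diag, Rabs_R0|]; lra. }
    pose proof (Rabs_triang (pd1 g (y1, y2) - pd1 g (x1, y2)) (pd1 g (x1, y2) - pd1 g (x1, x2))).
    lra.
  - apply (Lip1 (pd2 g) x N y x); auto.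
    intros z Hz; destruct (HB z Hz) as [_ [_ [_ [_ [? ?]]]]]; auto.
Qed.

Lemma Fb_lip sigma b g h x y N :
  Ck 3 (c1 sigma) -> Ck 3 (c2 sigma) -> Ck 3 (c1 b) -> Ck 3 (c2 b) -> Ck 3 g -> Ck 3 h ->
  (forall z, inbox x (1/4) z -> Bnd N z (c1 sigma) /\ Bnd N z (c2 sigma) /\
       Bnd N z (c1 b) /\ Bnd N z (c2 b) /\ Bnd N z g /\ Bnd N z h) ->
  inbox x (1/8) y ->
  Rabs (Fb sigma b g h y - Fb sigma b g h x) <=
    8 * (N * (N * (Rabs (fst y - fst x) + Rabs (snd y - snd x)))).
Proof.
  intros C1 C2 C3 C4 C5 C6 HB Hy.
  set (H := Rabs (fst y - fst x) + Rabs (snd y - snd x)).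
  assert (Hx14 : inbox x (1/4) x) by (split; rewrite Rminus_diag, Rabs_R0; lra).
  assert (Hy14 : inbox x (1/4) y) by (destruct Hy; split; lra).
  destruct (HB x Hx14) as [[S1x _] [[S2x _] [[B1x _] [[B2x _] [[_ [G1x [G2x _]]] [_ [H1x [H2x _]]]]]]]].
  destruct (HB y Hy14) as [[S1y _] [[S2y _] [[B1y _] [[B2y _] [[_ [G1y [G2y _]]] [_ [H1y [H2y _]]]]]]]].
  assert (L1 := LipAll (c1 sigma) x y N C1 (fun z Hz => proj1 (HB z Hz)) Hy).
  assert (L2 := LipAll (c2 sigma) x y N C2 (fun z Hz => proj1 (proj2 (HB z Hz))) Hy).
  assert (L3 := LipAll (c1 b) x y N C3 (fun z Hz => proj1 (proj2 (proj2 (HB z Hz)))) Hy).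
  assert (L4 := LipAll (c2 b) x y N C4 (fun z Hz => proj1 (proj2 (proj2 (proj2 (HB z Hz))))) Hy).
  assert (L5 := LipAll g x y N C5 (fun z Hz => proj1 (proj2 (proj2 (proj2 (proj2 (HB z Hz)))))) Hy).
  assert (L6 := LipAll h x y N C6 (fun z Hz => proj2 (proj2 (proj2 (proj2 (proj2 (HB z Hz)))))) Hy).
  cbv zeta in L1, L2, L3, L4, L5, L6. fold H in L1, L2, L3, L4, L5, L6.
  destruct L1 as [l1a _], L2 as [l2a _], L3 as [l3a _], L4 as [l4a _],
    L5 as [_ [l5b l5c]], L6 as [_ [l6b l6c]].
  pose proof (prod_diff _ _ _ _ N (N * H) S1y G1x l1a l5b) as P1.
  pose proof (prod_diff _ _ _ _ N (N * H) S2y G2x l2a l5c) as P2.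
  pose proof (prod_diff _ _ _ _ N (N * H) B1y H1x l3a l6b) as P3.
  pose proof (prod_diff _ _ _ _ N (N * H) B2y H2x l4a l6c) as P4.
  unfold Fb.
  set (d1 := c1 sigma y * pd1 g y - c1 sigma x * pd1 g x) in *.
  set (d2 := c2 sigma y * pd2 g y - c2 sigma x * pd2 g x) in *.
  set (d3 := c1 b y * pd1 h y - c1 b x * pd1 h x) in *.
  set (d4 := c2 b y * pd2 h y - c2 b x * pd2 h x) in *.
  replace (c1 sigma y * pd1 g y + c2 sigma y * pd2 g y - (c1 b y * pd1 h y + c2 b y * pd2 h y) -
   (c1 sigma x * pd1 g x + c2 sigma x * pd2 g x - (c1 b x * pd1 h x + c2 b x * pd2 h x)))
    with ((d1 + d2) + - (d3 + d4)) by (unfold d1, d2, d3, d4; ring).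
  pose proof (Rabs_triang (d1 + d2) (- (d3 + d4))) as T. rewrite Rabs_Ropp in T.
  pose proof (Rabs_triang d1 d2). pose proof (Rabs_triang d3 d4).
  lra.
Qed.

Lemma T1_lem L r s N A Kp N7 : 0 < L <= 1 -> 0 < s <= 1 -> 0 <= A <= r -> 0 <= Kp <= N ->
  N <= N7 -> L * (A * s * s * Kp * / s) <= r * N7.
Proof.
  intros HL Hs HA HK HN.
  replace (A * s * s * Kp * / s) with (A * s * Kp) by (field; lra).
  assert (A * s <= r * 1) by (apply Rmult_le_compat; lra).
  assert (A * s * Kp <= r * N) by (apply Rmult_le_compat; nra).
  assert (0 <= A * s * Kp) by (apply Rmult_le_pos; [apply Rmult_le_pos|]; lra).
  assert (L * (A * s * Kp) <= 1 * (A * s * Kp)) by (apply Rmult_le_compat_r; lra).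
  assert (r * N <= r * N7) by (apply Rmult_le_compat_l; lra).
  lra.
Qed.

Lemma T2_lem L r s s3 N A bG N7 : 0 < L <= 1 -> 0 < s <= 1 -> 0 < s3 -> 0 <= A <= r -> 0 <= bG ->
  s3 * L * bG <= 5 * (N * N) * (16 * (N * (N * N))) -> N * N * (N * (N * N)) <= N7 ->
  L * (A * s * s3 * bG) <= 80 * r * N7.
Proof.
  intros HL Hs Hs3 HA HbG Hb HN.
  replace (L * (A * s * s3 * bG)) with ((A * s) * (s3 * L * bG)) by ring.
  assert (A * s <= r * 1) by (apply Rmult_le_compat; lra).
  assert (0 <= A * s) by (apply Rmult_le_pos; lra).
  assert (0 <= s3 * L * bG) by (apply Rmult_le_pos; [apply Rmult_le_pos|]; lra).
  assert (A * s * (s3 * L * bG) <= r * (80 * N7)) by (apply Rmult_le_compat; lra).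
  lra.
Qed.

Lemma T3_lem L r s s3 N H bR : 0 < s -> s3 = s * s * s -> 0 <= L -> 0 <= bR -> 0 <= N -> 0 <= r ->
  0 <= H <= 10 * r * s * (N * N) ->
  s3 * L * bR <= 5 * (N * N) * (2 * (N * (H * H))) ->
  L * (s * bR) <= 1000 * (r * r) * N ^ 7.
Proof.
  intros Hs E3 HL HbR HN Hr HH Hb.
  assert (HH2 : H * H <= (10 * r * s * (N * N)) * (10 * r * s * (N * N))) by (apply Rmult_le_compat; lra).
  assert (0 <= N * (N * N)) by (apply Rmult_le_pos; [|apply Rmult_le_pos]; lra).
  assert (5 * (N * N) * (2 * (N * (H * H))) <= 10 * (N * (N * N)) * ((10 * r * s * (N * N)) * (10 * r * s * (N * N)))).
  { replace (5 * (N * N) * (2 * (N * (H * H)))) with (10 * (N * (N * N)) * (H * H)) by ring.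
    apply Rmult_le_compat_l; lra. }
  assert (Z : s * s * (L * (s * bR)) <= s * s * (1000 * (r * r) * N ^ 7)).
  { replace (s * s * (L * (s * bR))) with (s3 * L * bR) by (rewrite E3; ring).
    replace (s * s * (1000 * (r * r) * N ^ 7)) with
      (10 * (N * (N * N)) * ((10 * r * s * (N * N)) * (10 * r * s * (N * N)))) by ring.
    lra. }
  apply Rmult_le_reg_l in Z; auto. apply Rmult_lt_0_compat; lra.
Qed.

Lemma T4_lem L r s N H e2 N7 : 0 <= r -> 0 < s <= 1 -> 0 <= N ->
  L * e2 <= 80 * (N * N * (N * N)) * H -> H <= 10 * r * s * (N * N) ->
  N * N * (N * N) * (N * N) <= N7 -> L * e2 <= 800 * r * N7.
Proof.
  intros Hr Hs HN H1 H2 H3.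
  assert (0 <= N * N * (N * N)) by (repeat apply Rmult_le_pos; lra).
  assert (80 * (N * N * (N * N)) * H <= 80 * (N * N * (N * N)) * (10 * r * s * (N * N))).
  { apply Rmult_le_compat_l; lra. }
  assert (r * s * (N * N * (N * N) * (N * N)) <= r * 1 * N7).
  { assert (0 <= r * s) by (apply Rmult_le_pos; lra).
    assert (r * s <= r * 1) by (apply Rmult_le_compat_l; lra).
    apply Rmult_le_compat; try lra. repeat apply Rmult_le_pos; lra. }
  replace (80 * (N * N * (N * N)) * (10 * r * s * (N * N))) with
    (800 * (r * s * (N * N * (N * N) * (N * N)))) in H4 by ring.
  lra.
Qed.

Lemma fin_lem L r N7 a b c e1 e2 : 0 < L -> 0 <= r <= 1/4000 -> 0 <= N7 -> 4000 * r * N7 <= L ->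
  e1 <= a + b + c ->
  L * a <= r * N7 -> L * b <= 80 * r * N7 -> L * c <= 1000 * (r * r) * N7 ->
  L * e2 <= 800 * r * N7 -> e1 + e2 <= 1/2.
Proof.
  intros HL Hr HN7 HrN He1 Ha Hb Hc He2.
  assert (r * r * N7 <= (1/4000) * r * N7).
  { apply Rmult_le_compat_r; auto. replace ((1/4000) * r) with (r * (1/4000)) by ring.
    apply Rmult_le_compat_l; lra. }
  assert (L * e1 <= L * (a + b + c)) by (apply Rmult_le_compat_l; lra).
  assert (Z : L * (e1 + e2) <= L * (1/2)) by lra.
  apply Rmult_le_reg_l in Z; auto.
Qed.

Lemma pow_facts N : 1 <= N ->
  N <= N ^ 7 /\ N * N * (N * (N * N)) <= N ^ 7 /\ N * N * (N * N) * (N * N) <= N ^ 7 /\ 0 <= N ^ 7.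
Proof.
  intros HN.
  assert (1 <= N ^ 6) by (rewrite <- (pow1 6); apply pow_incr; lra).
  assert (1 <= N ^ 2) by (rewrite <- (pow1 2); apply pow_incr; lra).
  assert (0 <= N * N * (N * (N * N))) by (repeat apply Rmult_le_pos; lra).
  assert (0 <= N * N * (N * N) * (N * N)) by (repeat apply Rmult_le_pos; lra).
  repeat split.
  - replace (N ^ 7) with (N * N ^ 6) by ring.
    assert (N * 1 <= N * N ^ 6) by (apply Rmult_le_compat_l; lra). lra.
  - replace (N ^ 7) with (N * N * (N * (N * N)) * N ^ 2) by ring.
    assert (N * N * (N * (N * N)) * 1 <= N * N * (N * (N * N)) * N ^ 2) by (apply Rmult_le_compat_l; lra). lra.
  - replace (N ^ 7) with (N * N * (N * N) * (N * N) * N) by ring.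
    assert (N * N * (N * N) * (N * N) * 1 <= N * N * (N * N) * (N * N) * N) by (apply Rmult_le_compat_l; lra). lra.
  - apply pow_le; lra.
Qed.

Lemma box_ball x z : inbox x (1/4) z -> enorm (vsub z x) < 1.
Proof.
  intros [H1 H2]. pose proof (enorm_le_l1 (vsub z x)). unfold vsub in *; cbn [fst snd] in *. lra.
Qed.

Lemma abs_ge_of_sq L d : 0 < L -> L * L <= d * d -> L <= Rabs d.
Proof.
  intros HL H. destruct (Rle_dec L (Rabs d)); auto. exfalso.
  assert (Rabs d * Rabs d < L * L).
  { pose proof (Rabs_pos d). apply Rmult_le_0_lt_compat; lra. }
  rewrite <- Rabs_mult, Rabs_pos_eq in H0 by nra. lra.
Qed.

Theorem lemmaA4 :
  exists Kr qr Kd qd : R, 1 <= Kr /\ 1 <= qr /\ 1 <= Kd /\ 1 <= qd /\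
  forall (sigma b : vfield) (kappa : pt -> R) (x : pt) (N L : R),
    local_hyps b sigma kappa x N L ->
    forall (y : pt) (delta : R),
      0 < delta -> delta <= invC Kd qd N L ->
      normA (Adelta b sigma delta x) (vsub x y) <= invC Kr qr N L ->
      forall xi : pt,
        / 4 * normA (Adelta b sigma delta x) xi <= normA (Adelta b sigma delta y) xi /\
        normA (Adelta b sigma delta y) xi <= 4 * normA (Adelta b sigma delta x) xi.
Proof.
  exists 4000, 7, 1, 1. split; [lra|split;[lra|split;[lra|split;[lra|]]]].
  intros sigma b kappa x N L Hloc y delta Hd0 Hdd Hrho xi.
  destruct Hloc as [[Cb1 Cb2] [[Cs1 Cs2] [HL0 [HL1 [HN1 [Hball [_ Hkap]]]]]]].
  unfold invC in Hdd, Hrho.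
  set (P := N / L) in *.
  assert (HP : 1 <= P) by (unfold P; apply Rmult_le_reg_r with L; auto; unfold Rdiv;
     rewrite Rmult_assoc, Rinv_l by lra; lra).
  assert (HP0 : 0 < P) by lra.
  assert (E1 : Rpower P 1 = P) by (apply Rpower_1; lra).
  assert (E7 : Rpower P 7 = P ^ 7).
  { rewrite <- (Rpower_pow 7 P) by lra. f_equal. simpl. ring. }
  rewrite E1 in Hdd. rewrite E7 in Hrho.
  set (r := / (4000 * P ^ 7)) in *.
  assert (Hr0 : 0 < r) by (unfold r; apply Rinv_0_lt_compat; apply Rmult_lt_0_compat; [lra|apply pow_lt; lra]).
  assert (HrN : 4000 * r * N ^ 7 <= L).
  { assert (EN : N = P * L) by (unfold P; field; lra). rewrite EN, Rpow_mult_distr.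
    assert (P ^ 7 <> 0) by (apply pow_nonzero; lra).
    replace (4000 * r * (P ^ 7 * L ^ 7)) with (L ^ 7) by (unfold r; field; repeat split; try lra; auto).
    assert (L ^ 6 <= 1 ^ 6) by (apply pow_incr; lra). rewrite pow1 in H0.
    replace (L ^ 7) with (L * L ^ 6) by ring.
    assert (L * L ^ 6 <= L * 1) by (apply Rmult_le_compat_l; lra). lra. }
  assert (Hdel1 : delta <= 1).
  { eapply Rle_trans. apply Hdd. rewrite Rmult_1_l. rewrite <- Rinv_1.
    apply Rinv_le_contravar; lra. }
  assert (Hr1 : r <= 1 / 4000).
  { assert (1 <= N ^ 7) by (rewrite <- (pow1 7); apply pow_incr; lra). nra. }
  set (s := sqrt delta).
  assert (Hs0 : 0 < s) by (apply sqrt_lt_R0; auto).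
  assert (Hss : s * s = delta) by (apply sqrt_sqrt; lra).
  assert (Hs1 : s <= 1) by nra.
  set (s3 := delta * s).
  assert (Hs30 : 0 < s3) by (unfold s3; nra).
  assert (Hs3s : s3 <= s) by (unfold s3; nra).
  assert (HB : forall z, inbox x (1/4) z ->
     Bnd N z (c1 sigma) /\ Bnd N z (c2 sigma) /\ Bnd N z (c1 b) /\ Bnd N z (c2 b)).
  { intros z Hz. apply nfun_bnd. apply (Hball z (box_ball x z Hz)). }
  assert (HB6 : forall g h, (g = c1 b /\ h = c1 sigma) \/ (g = c2 b /\ h = c2 sigma) ->
     forall z, inbox x (1/4) z -> Bnd N z (c1 sigma) /\ Bnd N z (c2 sigma) /\
       Bnd N z (c1 b) /\ Bnd N z (c2 b) /\ Bnd N z g /\ Bnd N z h).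
  { intros g h Hgh z Hz. destruct (HB z Hz) as [? [? [? ?]]].
    destruct Hgh as [[-> ->]|[-> ->]]; refine (conj _ (conj _ (conj _ (conj _ (conj _ _))))); assumption. }
  set (S := sigma x). set (Bx := bracket b sigma x).
  set (M := Adelta b sigma delta x).
  assert (EM : M = Mat2 (vscal s S) (vscal s3 Bx)) by reflexivity.
  set (M' := Adelta b sigma delta y).
  assert (EM' : M' = Mat2 (vscal s (sigma y)) (vscal s3 (bracket b sigma y))) by reflexivity.
  assert (Hx14 : inbox x (1/4) x) by (split; rewrite Rminus_diag, Rabs_R0; lra).
  assert (Hx1 : enorm (vsub x x) < 1) by (apply box_ball; auto).
  assert (HdA : L <= Rabs (fst S * snd Bx - fst Bx * snd S)).
  { apply abs_ge_of_sq; auto. apply (det_bound (Amat b sigma x) L HL0). apply (Hball x Hx1). }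
  destruct (HB x Hx14) as [[HS1 _] [[HS2 _] _]].
  assert (HBx1 : Rabs (fst Bx) <= 4 * (N * N)).
  { unfold Bx. rewrite bracket_eq. cbn [fst]. destruct (HB6 (c1 b) (c1 sigma) (or_introl (conj eq_refl eq_refl)) x Hx14) as [? [? [? [? [? ?]]]]].
    apply Fb_bound; auto. }
  assert (HBx2 : Rabs (snd Bx) <= 4 * (N * N)).
  { unfold Bx. rewrite bracket_eq. cbn [snd]. destruct (HB6 (c2 b) (c2 sigma) (or_intror (conj eq_refl eq_refl)) x Hx14) as [? [? [? [? [? ?]]]]].
    apply Fb_bound; auto. }
  assert (HN2 : N <= N * N) by nra.
  assert (HdM : mdet M <> 0).
  { rewrite EM. unfold mdet, vscal; cbn [fst snd col1 col2].
    replace (s * fst S * (s3 * snd Bx) - s3 * fst Bx * (s * snd S)) with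
      ((s * s3) * (fst S * snd Bx - fst Bx * snd S)) by ring.
    apply Rmult_integral_contrapositive_currified. apply Rgt_not_eq, Rmult_lt_0_compat; lra.
    intro E; rewrite E, Rabs_R0 in HdA; lra. }
  set (w := mapply (minv M) (vsub x y)).
  assert (Hw : enorm w <= r) by exact Hrho.
  assert (Hw1 : Rabs (fst w) <= r) by (pose proof (abs_le_enorm1 w); lra).
  assert (Hw2 : Rabs (snd w) <= r) by (pose proof (abs_le_enorm2 w); lra).
  assert (Exy : vsub x y = mapply M w) by (unfold w; rewrite minv_right; auto).
  assert (Eh1 : fst y - fst x = - (fst w * (s * fst S) + snd w * (s3 * fst Bx))).
  { assert (E := f_equal fst Exy). rewrite EM in E. unfold vsub, mapply, vadd, vscal in E.
    cbn [fst snd col1 col2] in E. lra. }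
  assert (Eh2 : snd y - snd x = - (fst w * (s * snd S) + snd w * (s3 * snd Bx))).
  { assert (E := f_equal snd Exy). rewrite EM in E. unfold vsub, mapply, vadd, vscal in E.
    cbn [fst snd col1 col2] in E. lra. }
  set (H := Rabs (fst y - fst x) + Rabs (snd y - snd x)).
  assert (HH0 : 0 <= H) by (unfold H; pose proof (Rabs_pos (fst y - fst x)); pose proof (Rabs_pos (snd y - snd x)); lra).
  assert (HHb : H <= 10 * r * s * (N * N)).
  { unfold H. rewrite Eh1, Eh2.
    pose proof (lin_bnd (fst w) (snd w) (fst S) (fst Bx) r s s3 N (4 * (N * N)) Hw1 Hw2 HS1 HBx1 Hs30 Hs3s).
    pose proof (lin_bnd (fst w) (snd w) (snd S) (snd Bx) r s s3 N (4 * (N * N)) Hw1 Hw2 HS2 HBx2 Hs30 Hs3s).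
    assert (r * s * N <= r * s * (N * N)) by (apply Rmult_le_compat_l; nra).
    lra. }
  assert (HN7 : N * N <= N ^ 7).
  { replace (N ^ 7) with ((N * N) * N ^ 5) by ring.
    assert (1 <= N ^ 5) by (rewrite <- (pow1 5); apply pow_incr; lra). nra. }
  assert (HH1 : H <= 1 / 400).
  { assert (10 * r * s * (N * N) <= 10 * r * N ^ 7).
    { assert (s * (N * N) <= N ^ 7) by nra. nra. }
    nra. }
  assert (Hy8 : inbox x (1/8) y).
  { unfold H in HH1. pose proof (Rabs_pos (fst y - fst x)); pose proof (Rabs_pos (snd y - snd x)).
    split; lra. }
  assert (Hy1 : enorm (vsub y x) < 1) by (apply box_ball; destruct Hy8; split; lra).
  assert (HdAy : L <= Rabs (fst (sigma y) * snd (bracket b sigma y) - fst (bracket b sigma y) * snd (sigma y))).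
  { apply abs_ge_of_sq; auto. apply (det_bound (Amat b sigma y) L HL0). apply (Hball y Hy1). }
  assert (HdM' : mdet M' <> 0).
  { rewrite EM'. unfold mdet, vscal; cbn [fst snd col1 col2].
    set (S' := sigma y) in *. set (B' := bracket b sigma y) in *.
    replace (s * fst S' * (s3 * snd B') - s3 * fst B' * (s * snd S')) with
      ((s * s3) * (fst S' * snd B' - fst B' * snd S')) by ring.
    apply Rmult_integral_contrapositive_currified. apply Rgt_not_eq, Rmult_lt_0_compat; lra.
    intro E; rewrite E, Rabs_R0 in HdAy; lra. }
  set (u := mapply (minv M') xi).
  assert (Hxi : mapply (minv M) xi = mapply (minv M) (mapply M' u)) by (unfold u; rewrite minv_right; auto).
  rewrite key_identity in Hxi by auto.
  set (e1 := mapply (minv M) (vsub (col1 M') (col1 M))) in Hxi.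
  set (e2 := mapply (minv M) (vsub (col2 M') (col2 M))) in Hxi.
  assert (HBy : forall z, inbox x (1/4) z ->
    Bnd N z (c1 sigma) /\ Bnd N z (c2 sigma) /\ Bnd N z (c1 b) /\ Bnd N z (c2 b) /\
    Bnd N z (c1 b) /\ Bnd N z (c1 sigma)) by (apply HB6; left; split; reflexivity).
  assert (HBy2 : forall z, inbox x (1/4) z ->
    Bnd N z (c1 sigma) /\ Bnd N z (c2 sigma) /\ Bnd N z (c1 b) /\ Bnd N z (c2 b) /\
    Bnd N z (c2 b) /\ Bnd N z (c2 sigma)) by (apply HB6; right; split; reflexivity).
  assert (He2 : L * l1 e2 <= 80 * (N * N * (N * N)) * H).
  { pose proof (Fb_lip sigma b (c1 b) (c1 sigma) x y N Cs1 Cs2 Cb1 Cb2 Cb1 Cs1 HBy Hy8) as F1.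
    pose proof (Fb_lip sigma b (c2 b) (c2 sigma) x y N Cs1 Cs2 Cb1 Cb2 Cb2 Cs2 HBy2 Hy8) as F2.
    fold H in F1, F2.
    assert (Hv : l1 (vsub (col2 M') (col2 M)) <= s3 * (16 * (N * N) * H)).
    { rewrite EM, EM'. unfold l1, vsub, vscal; cbn [fst snd col1 col2].
      rewrite (bracket_eq b sigma y). fold Bx. unfold Bx. rewrite (bracket_eq b sigma x).
      cbn [fst snd].
      replace (s3 * Fb sigma b (c1 b) (c1 sigma) y - s3 * Fb sigma b (c1 b) (c1 sigma) x) with
        (s3 * (Fb sigma b (c1 b) (c1 sigma) y - Fb sigma b (c1 b) (c1 sigma) x)) by ring.
      replace (s3 * Fb sigma b (c2 b) (c2 sigma) y - s3 * Fb sigma b (c2 b) (c2 sigma) x) with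
        (s3 * (Fb sigma b (c2 b) (c2 sigma) y - Fb sigma b (c2 b) (c2 sigma) x)) by ring.
      rewrite !Rabs_mult, (Rabs_pos_eq s3) by lra. nra. }
    pose proof (Mi_bound' s s3 L N (4 * (N * N)) S Bx (vsub (col2 M') (col2 M)) Hs30 Hs3s HL0 HdA HS1 HS2 HBx1 HBx2) as Mb.
    rewrite <- EM in Mb. fold e2 in Mb.
    pose proof (l1_ge0 e2). pose proof (l1_ge0 (vsub (col2 M') (col2 M))).
    assert (Hc : (N + 4 * (N * N)) * l1 (vsub (col2 M') (col2 M)) <= (5 * (N * N)) * (s3 * (16 * (N * N) * H))).
    { apply Rmult_le_compat; nra. }
    assert (s3 * (L * l1 e2) <= s3 * (80 * (N * N * (N * N)) * H)) by nra.
    apply Rmult_le_reg_l with s3; auto. }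
  destruct (Hkap x Hx1) as [Hk [Hkb _]].
  assert (Hkap1 : Rabs (kappa x) <= N) by (pose proof (proj2 (Hball x Hx1)); lra).
  set (q11 := pd1 (c1 sigma) x). set (q21 := pd2 (c1 sigma) x).
  set (q12 := pd1 (c2 sigma) x). set (q22 := pd2 (c2 sigma) x).
  assert (K1 : fst S * q11 + snd S * q21 = kappa x * fst S).
  { exact (f_equal fst Hk). }
  assert (K2 : fst S * q12 + snd S * q22 = kappa x * snd S).
  { exact (f_equal snd Hk). }
  set (G := (fst Bx * q11 + snd Bx * q21, fst Bx * q12 + snd Bx * q22)).
  set (R1 := c1 sigma y - c1 sigma x - ((fst y - fst x) * q11 + (snd y - snd x) * q21)).
  set (R2 := c2 sigma y - c2 sigma x - ((fst y - fst x) * q12 + (snd y - snd x) * q22)).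
  set (k1 := - (fst w * s * s * kappa x)). set (k2 := - (snd w * s * s3)).
  assert (Dec : vsub (col1 M') (col1 M) = vadd (vscal k1 S) (vadd (vscal k2 G) (vscal s (R1, R2)))).
  { rewrite EM, EM'. unfold vsub, vadd, vscal; cbn [fst snd col1 col2]. unfold R1, R2, k1, k2, G.
    cbn [fst snd]. rewrite Eh1, Eh2.
    assert (fst w * s * s * (kappa x * fst S) = fst w * s * s * (fst S * q11 + snd S * q21)) by (rewrite K1; ring).
    assert (fst w * s * s * (kappa x * snd S) = fst w * s * s * (fst S * q12 + snd S * q22)) by (rewrite K2; ring).
    change (c1 sigma y) with (fst (sigma y)). change (c2 sigma y) with (snd (sigma y)).
    change (c1 sigma x) with (fst S). change (c2 sigma x) with (snd S).
    f_equal; lra. }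
  assert (HdA0 : fst S * snd Bx - fst Bx * snd S <> 0) by (intro E; rewrite E, Rabs_R0 in HdA; lra).
  set (bG := l1 (mapply (minv M) G)). set (bR := l1 (mapply (minv M) (R1, R2))).
  assert (Hl1e1 : l1 e1 <= Rabs k1 * / s + Rabs k2 * bG + s * bR).
  { unfold e1. rewrite Dec, !mapply_add, !mapply_scal.
    assert (MS : mapply (minv M) S = (/ s, 0)) by (rewrite EM; apply Mi_S; auto).
    rewrite MS. eapply Rle_trans. apply l1_add. rewrite l1_scal.
    eapply Rle_trans. apply Rplus_le_compat_l. apply l1_add. rewrite !l1_scal.
    assert (l1 (/ s, 0) = / s).
    { unfold l1; cbn [fst snd]. rewrite Rabs_R0, Rplus_0_r. apply Rabs_pos_eq.
      apply Rlt_le, Rinv_0_lt_compat; lra. }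
    rewrite H0, (Rabs_pos_eq s) by lra. fold bG bR. lra. }
  assert (Hq : Rabs q11 <= N /\ Rabs q21 <= N /\ Rabs q12 <= N /\ Rabs q22 <= N).
  { destruct (HB x Hx14) as [[_ [? [? _]]] [[_ [? [? _]]] _]]. auto. }
  assert (HlG : l1 G <= 16 * (N * (N * N))).
  { unfold l1, G; cbn [fst snd]. destruct Hq as [Q1 [Q2 [Q3 Q4]]].
    pose proof (Rabs_triang (fst Bx * q11) (snd Bx * q21)).
    pose proof (Rabs_triang (fst Bx * q12) (snd Bx * q22)).
    rewrite !Rabs_mult in *.
    assert (Rabs (fst Bx) * Rabs q11 <= 4 * (N * N) * N) by (apply Rmult_le_compat; auto; apply Rabs_pos).
    assert (Rabs (snd Bx) * Rabs q21 <= 4 * (N * N) * N) by (apply Rmult_le_compat; auto; apply Rabs_pos).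
    assert (Rabs (fst Bx) * Rabs q12 <= 4 * (N * N) * N) by (apply Rmult_le_compat; auto; apply Rabs_pos).
    assert (Rabs (snd Bx) * Rabs q22 <= 4 * (N * N) * N) by (apply Rmult_le_compat; auto; apply Rabs_pos).
    lra. }
  assert (HlR : l1 (R1, R2) <= 2 * (N * (H * H))).
  { unfold l1; cbn [fst snd].
    destruct (Ck3_P (c1 sigma) Cs1) as [P0 [P1 P2]].
    destruct (Ck3_P (c2 sigma) Cs2) as [P0' [P1' P2']].
    assert (T1 := Taylor (c1 sigma) x N y P0 P1 P2).
    assert (T2 := Taylor (c2 sigma) x N y P0' P1' P2').
    assert (A1 : Rabs R1 <= N * (H * H)).
    { apply T1; auto. intros z Hz. destruct (HB z Hz) as [[_ [_ [_ [? [? ?]]]]] _]. auto. }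
    assert (A2 : Rabs R2 <= N * (H * H)).
    { apply T2; auto. intros z Hz. destruct (HB z Hz) as [_ [[_ [_ [_ [? [? ?]]]]] _]]. auto. }
    lra. }
  assert (HbG : s3 * L * bG <= (N + 4 * (N * N)) * l1 G).
  { unfold bG. rewrite EM. apply Mi_bound'; auto. }
  assert (HbR : s3 * L * bR <= (N + 4 * (N * N)) * l1 (R1, R2)).
  { unfold bR. rewrite EM. apply Mi_bound'; auto. }
  destruct (pow_facts N HN1) as [F1 [F5 [F6 HN7p]]].
  assert (HbG0 : 0 <= bG) by apply l1_ge0. assert (HbR0 : 0 <= bR) by apply l1_ge0.
  assert (N5 : N + 4 * (N * N) <= 5 * (N * N)) by lra.
  assert (Ek1 : Rabs k1 = Rabs (fst w) * s * s * Rabs (kappa x)).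
  { unfold k1. rewrite Rabs_Ropp, !Rabs_mult, (Rabs_pos_eq s) by lra. ring. }
  assert (Ek2 : Rabs k2 = Rabs (fst (snd w, 0)) * s * s3).
  { unfold k2. cbn [fst]. rewrite Rabs_Ropp, !Rabs_mult, (Rabs_pos_eq s), (Rabs_pos_eq s3) by lra. ring. }
  cbn [fst] in Ek2.
  assert (T1 : L * (Rabs k1 * / s) <= r * N ^ 7).
  { rewrite Ek1. apply T1_lem with N; try split; try lra; try apply Rabs_pos. }
  assert (HG : s3 * L * bG <= 5 * (N * N) * (16 * (N * (N * N)))).
  { eapply Rle_trans. apply HbG. apply Rmult_le_compat; try lra; try apply l1_ge0. }
  assert (T2 : L * (Rabs k2 * bG) <= 80 * r * N ^ 7).
  { rewrite Ek2. apply T2_lem with N; try split; try lra; try apply Rabs_pos. }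
  assert (HR : s3 * L * bR <= 5 * (N * N) * (2 * (N * (H * H)))).
  { eapply Rle_trans. apply HbR. apply Rmult_le_compat; try lra; try apply l1_ge0. }
  assert (T3 : L * (s * bR) <= 1000 * (r * r) * N ^ 7).
  { apply T3_lem with s3 H; try split; try lra. unfold s3; rewrite <- Hss; ring. }
  assert (T4 : L * l1 e2 <= 800 * r * N ^ 7).
  { apply T4_lem with s N H; try split; try lra. }
  assert (He : l1 e1 + l1 e2 <= 1/2).
  { apply (fin_lem L r (N ^ 7) (Rabs k1 * / s) (Rabs k2 * bG) (s * bR)); try split; try lra. }
  exact (compare_final _ _ _ _ Hxi He).
Qed.
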